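(* Let $n\ge 4$ and $2\le t\le n-2$. Under the permutation null distribution, for all $a,b\in\{1,2\}$, \[ \mathsf{cov}\big(W_a(t),D_b(t)\big)=0 . \] Consequently $W_1(t)\pm W_2(t)$ are each uncorrelated with $D_1(t)\pm D_2(t)$ (all four sign combinations), and more generally any linear combination of $W_1(t),W_2(t)$ is uncorrelated with any linear combination of $D_1(t),D_2(t)$.
   Context: Let $G_1,\dots,G_n$ be a sequence of observations (networks) and let $K_1,K_2$ be two real symmetric $n\times n$ kernel matrices computed from this sequence, with $(i,j)$ entry $k_{xij}$ of $K_x$, $x\in\{1,2\}$. The permutation null distribution assigns probability $1/n!$ to each of the $n!$ permutations of the sequence, i.e. the kernel matrices $K_x$ are replaced by $(k_{x\pi(i)\pi(j)})_{i,j}$ for a uniformly random permutation $\pi$ of $\{1,\dots,n\}$ (the same $\pi$ for both kernels); $\mathsf{E},\mathsf{var},\mathsf{cov}$ denote expectation, variance and covariance under this distribution. For $x\in\{1,2\}$ define \[ \alpha_x(t)=\frac{1}{t(t-1)}\sum_{i=1}^n\sum_{j\ne i}k_{xij}\mathbb{1}\{i,j\le t\},\qquad \beta_x(t)=\frac{1}{(n-t)(n-t-1)}\sum_{i=1}^n\sum_{j\ne i}k_{xij}\mathbb{1}\{i,j> t\}, \] \[ W_x(t)=\frac{t}{n}\alpha_x(t)+\frac{n-t}{n}\beta_x(t),\qquad D_x(t)=\frac{t(t-1)}{n(n-1)}\alpha_x(t)-\frac{(n-t)(n-t-1)}{n(n-1)}\beta_x(t). \] *)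

(* Defs.v *)
From HB Require Import structures.
From mathcomp Require Import all_boot all_order all_algebra all_fingroup.
Set Implicit Arguments. Unset Strict Implicit. Unset Printing Implicit Defensive.
Import Order.TTheory GRing.Theory Num.Theory.
Local Open Scope ring_scope.

Section Defs.
Variables (R : realFieldType) (n : nat).

(* Observations are indexed 0..n-1 (paper: 1..n); "i <= t" (1-based)
   becomes "(i < t)%N" (0-based), "i > t" becomes "(t <= i)%N". *)

Definition alpha (K : 'M[R]_n) (t : nat) (s : 'S_n) : R :=
  ((t * (t - 1))%:R)^-1 *
  \sum_(i < n) \sum_(j < n | j != i)
      K (s i) (s j) * ((i < t)%N && (j < t)%N)%:R.

Definition beta (K : 'M[R]_n) (t : nat) (s : 'S_n) : R :=
  (((n - t) * (n - t - 1))%:R)^-1 *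
  \sum_(i < n) \sum_(j < n | j != i)
      K (s i) (s j) * ((t <= i)%N && (t <= j)%N)%:R.

Definition Wstat (K : 'M[R]_n) (t : nat) (s : 'S_n) : R :=
  t%:R / n%:R * alpha K t s + (n - t)%:R / n%:R * beta K t s.

Definition Dstat (K : 'M[R]_n) (t : nat) (s : 'S_n) : R :=
  (t * (t - 1))%:R / (n * (n - 1))%:R * alpha K t s
  - ((n - t) * (n - t - 1))%:R / (n * (n - 1))%:R * beta K t s.

(* Permutation null distribution: uniform probability 1/n! on 'S_n. *)
Definition permE (X : 'S_n -> R) : R :=
  (n`!%:R)^-1 * \sum_(s : 'S_n) X s.

Definition permCov (X Y : 'S_n -> R) : R :=
  permE (fun s => X s * Y s) - permE X * permE Y.

End Defs.

(* Main.v *)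
Require Import Defs.
From HB Require Import structures.
From mathcomp Require Import all_boot all_order all_algebra all_fingroup.
From mathcomp Require Import ring zify.
Import Order.TTheory GRing.Theory Num.Theory.
Local Open Scope ring_scope.

Lemma sum_perm_inv (R : realFieldType) n (F : 'S_n -> R) (p : 'S_n) :
  \sum_(s : 'S_n) F s = \sum_(s : 'S_n) F (p * s)%g.
Proof. exact: (reindex_inj (mulgI p)). Qed.

Lemma ext3 n (a0 a1 a2 i j k : 'I_n) : a0 != a1 -> a0 != a2 -> a1 != a2 ->
  i != j -> i != k -> j != k ->
  exists p : 'S_n, [/\ p a0 = i, p a1 = j & p a2 = k].
Proof.
move=> d01 d02 d12 dij dik djk.
pose p1 := tperm a0 i.
pose p2 := (p1 * tperm (p1 a1) j)%g.
have ne1 : p1 a1 != i.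
  apply/eqP => h; move: d01; rewrite -(inj_eq (@perm_inj _ p1)) h /p1 tpermL eqxx //.
have p2a0 : p2 a0 = i by rewrite permM tpermL tpermD // eq_sym.
have p2a1 : p2 a1 = j by rewrite permM tpermL.
have ne2 : p2 a2 != i by rewrite -p2a0 (inj_eq perm_inj) eq_sym.
have ne3 : p2 a2 != j by rewrite -p2a1 (inj_eq perm_inj) eq_sym.
exists (p2 * tperm (p2 a2) k)%g; split.
- by rewrite permM p2a0 tpermD // eq_sym.
- by rewrite permM p2a1 tpermD // eq_sym.
- by rewrite permM tpermL.
Qed.

Lemma ext2 n (a0 a1 i j : 'I_n) : a0 != a1 -> i != j ->
  exists p : 'S_n, p a0 = i /\ p a1 = j.
Proof.
move=> d01 dij.
pose p1 := tperm a0 i.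
have ne1 : p1 a1 != i.
  apply/eqP => h; move: d01; rewrite -(inj_eq (@perm_inj _ p1)) h /p1 tpermL eqxx //.
exists (p1 * tperm (p1 a1) j)%g; split.
- by rewrite permM tpermL tpermD // eq_sym.
- by rewrite permM tpermL.
Qed.

Lemma swap_neq (R : realFieldType) n (F : 'I_n -> 'I_n -> R) :
  \sum_(i < n) \sum_(j < n | j != i) F i j = \sum_(j < n) \sum_(i < n | i != j) F i j.
Proof.
transitivity (\sum_(i < n) \sum_(j < n) if j != i then F i j else 0).
  by apply: eq_bigr => i _; rewrite big_mkcond.
rewrite exchange_big; apply: eq_bigr => j _; rewrite [RHS]big_mkcond; apply: eq_bigr => i _ /=.
by rewrite eq_sym.
Qed.

Lemma reidx_neq (R : realFieldType) n (s : 'S_n) (F : 'I_n -> R) (i : 'I_n) :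
  \sum_(j < n | j != i) F (s j) = \sum_(v < n | v != s i) F v.
Proof.
rewrite [RHS](reindex_inj (@perm_inj _ s)) /=.
by apply: eq_bigl => j; rewrite (inj_eq perm_inj).
Qed.

Lemma reidx (R : realFieldType) n (s : 'S_n) (F : 'I_n -> R) :
  \sum_(j < n) F (s j) = \sum_(v < n) F v.
Proof. by rewrite [RHS](reindex_inj (@perm_inj _ s)). Qed.

Lemma sumP_ind (R : realFieldType) n (P : pred 'I_n) (i : 'I_n) :
  \sum_(k < n) (P k)%:R * (k == i)%:R = (P i)%:R :> R.
Proof.
rewrite (bigD1 i) //= eqxx mulr1 big1 ?addr0 // => k /negbTE ->; by rewrite mulr0.
Qed.

Lemma count2 (R : realFieldType) n (P : pred 'I_n) (i j : 'I_n) (h g : R) :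
  i != j -> P i -> P j ->
  \sum_(k < n) (P k)%:R * (if (k == i) || (k == j) then h else g)
  = h *+ 2 + g * (\sum_(k < n) (P k)%:R - 2).
Proof.
move=> dij Pi Pj.
transitivity (\sum_(k < n) ((P k)%:R * g + ((P k)%:R * (k == i)%:R + (P k)%:R * (k == j)%:R) * (h - g))).
  apply: eq_bigr => k _.
  case: (eqVneq k i) => [->|ki]; first by rewrite /= (negbTE dij) Pi /=; ring.
  case: (eqVneq k j) => [->|kj] /=; first by rewrite Pj /=; ring.
  ring.
rewrite big_split /= -mulr_suml -mulr_suml big_split /= !sumP_ind Pi Pj /=; ring.
Qed.

Lemma count0 (R : realFieldType) n (P : pred 'I_n) (i j : 'I_n) (h g : R) :
  ~~ P i -> ~~ P j ->
  \sum_(k < n) (P k)%:R * (if (k == i) || (k == j) then h else g)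
  = g * \sum_(k < n) (P k)%:R.
Proof.
move=> Pi Pj.
transitivity (\sum_(k < n) ((P k)%:R * g + ((P k)%:R * (k == i)%:R + (P k)%:R * (k == j)%:R) * (h - g))).
  apply: eq_bigr => k _.
  case: (eqVneq k i) => [->|ki]; first by rewrite (negbTE Pi) /=; ring.
  case: (eqVneq k j) => [->|kj] /=; first by rewrite (negbTE Pj) /=; ring.
  ring.
rewrite big_split /= -mulr_suml -mulr_suml big_split /= !sumP_ind (negbTE Pi) (negbTE Pj) /=; ring.
Qed.

Lemma cnt_lt (R : realFieldType) n t : (t <= n)%N ->
  \sum_(k < n) ((k < t)%N)%:R = t%:R :> R.
Proof.
move=> htn.
rewrite -(big_mkord xpredT (fun k => ((k < t)%N)%:R)) (@big_cat_nat _ _ _ t 0 n _ _ (leq0n t) htn) /=.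
rewrite big_nat_cond (eq_bigr (fun _ => 1)); last first.
  by move=> k /andP [/andP [_ ->] _].
rewrite -big_nat_cond sumr_const_nat subn0.
rewrite big_nat_cond big1 ?addr0; first by [].
by move=> k /andP [/andP [hk _] _]; rewrite ltnNge hk.
Qed.

Lemma cnt_ge (R : realFieldType) n t : (t <= n)%N ->
  \sum_(k < n) ((t <= k)%N)%:R = (n - t)%:R :> R.
Proof.
move=> htn.
transitivity (\sum_(k < n) (1 - ((k < t)%N)%:R : R)).
  by apply: eq_bigr => k _; rewrite ltnNge; case: (t <= k)%N => /=; ring.
rewrite sumrB cnt_lt // sumr_const card_ord natrB //.
Qed.

Lemma pairsum (R : realFieldType) n (P : pred 'I_n) (f : 'I_n -> 'I_n -> R) (F0 : R) :
  (forall i j, i != j -> P i -> P j -> f i j = F0) ->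
  \sum_(i < n) \sum_(j < n | j != i) f i j * (P i && P j)%:R
  = (\sum_(k < n) (P k)%:R) * ((\sum_(k < n) (P k)%:R) - 1) * F0.
Proof.
move=> hf.
set c := \sum_(k < n) (P k)%:R.
transitivity (\sum_(i < n) (P i)%:R * (F0 * (c - 1))).
  apply: eq_bigr => i _.
  case Pi: (P i) => /=; last by rewrite mul0r big1 // => j _; rewrite mulr0.
  have hc : c = 1 + \sum_(j < n | j != i) (P j)%:R by rewrite /c (bigD1 i) //= Pi.
  rewrite hc mul1r (addrC 1) addrK mulr_sumr; apply: eq_bigr => j ji.
  case Pj: (P j); last by rewrite /= !mulr0.
  by rewrite hf // ?(eq_sym i) // !mulr1.
by rewrite -mulr_suml -/c; ring.
Qed.

Arguments reidx_neq {R n}. Arguments sum_perm_inv {R n}. Arguments ext2 {n a0 a1 i j}. Arguments ext3 {n a0 a1 a2 i j k}. Arguments reidx {R n}.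

Definition rho (R : realFieldType) n (M : 'M[R]_n) (u : 'I_n) : R :=
  \sum_(v < n | v != u) (M u v + M v u).
Definition Ctot (R : realFieldType) n (M : 'M[R]_n) : R :=
  \sum_(u < n) \sum_(v < n | v != u) M u v.
Definition S1 (R : realFieldType) n (M : 'M[R]_n) t (s : 'S_n) : R :=
  \sum_(i < n) \sum_(j < n | j != i) M (s i) (s j) * ((i < t)%N && (j < t)%N)%:R.
Definition S2 (R : realFieldType) n (M : 'M[R]_n) t (s : 'S_n) : R :=
  \sum_(i < n) \sum_(j < n | j != i) M (s i) (s j) * ((t <= i)%N && (t <= j)%N)%:R.
Arguments rho {R n}. Arguments Ctot {R n}. Arguments S1 {R n}. Arguments S2 {R n}.

Lemma lin_S (R : realFieldType) n t (M : 'M[R]_n) (s : 'S_n) :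
  S1 M t s - S2 M t s = \sum_(k < n) ((k < t)%N)%:R * rho M (s k) - Ctot M.
Proof.
transitivity (\sum_(i < n) \sum_(j < n | j != i)
   (M (s i) (s j) * ((i < t)%N)%:R + M (s i) (s j) * ((j < t)%N)%:R - M (s i) (s j))).
  rewrite /S1 /S2 -sumrB; apply: eq_bigr => i _; rewrite -sumrB; apply: eq_bigr => j _.
  rewrite [(t <= i)%N]leqNgt [(t <= j)%N]leqNgt.
  by case: (i < t)%N; case: (j < t)%N => /=; ring.
under eq_bigr => i _ do rewrite sumrB big_split /=.
rewrite sumrB big_split /=.
have T1 : \sum_(i < n) \sum_(j < n | j != i) M (s i) (s j) * ((i < t)%N)%:R
   = \sum_(k < n) ((k < t)%N)%:R * \sum_(v < n | v != s k) M (s k) v.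
  apply: eq_bigr => i _; rewrite -mulr_suml mulrC; congr (_ * _).
  exact: (reidx_neq s (fun v => M (s i) v) i).
have T2 : \sum_(i < n) \sum_(j < n | j != i) M (s i) (s j) * ((j < t)%N)%:R
   = \sum_(k < n) ((k < t)%N)%:R * \sum_(v < n | v != s k) M v (s k).
  rewrite swap_neq; apply: eq_bigr => j _; rewrite -mulr_suml mulrC; congr (_ * _).
  exact: (reidx_neq s (fun v => M v (s j)) j).
have T3 : \sum_(i < n) \sum_(j < n | j != i) M (s i) (s j) = Ctot M.
  transitivity (\sum_(i < n) \sum_(v < n | v != s i) M (s i) v).
    apply: eq_bigr => i _; exact: (reidx_neq s (fun v => M (s i) v) i).
  exact: (reidx s (fun u => \sum_(v < n | v != u) M u v)).
rewrite T1 T2 T3 -big_split /=; congr (_ - _); apply: eq_bigr => k _.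
by rewrite /rho big_split /= mulrDr.
Qed.

Definition gS (R : realFieldType) n (M : 'M[R]_n) (r : 'I_n -> R) (i j k : 'I_n) : R :=
  \sum_(s : 'S_n) M (s i) (s j) * r (s k).
Definition G2 (R : realFieldType) n (M : 'M[R]_n) (i j : 'I_n) : R :=
  \sum_(s : 'S_n) M (s i) (s j).
Definition E1 (R : realFieldType) n (r : 'I_n -> R) (k : 'I_n) : R :=
  \sum_(s : 'S_n) r (s k).
Arguments gS {R n}. Arguments G2 {R n}. Arguments E1 {R n}.

Lemma gS_inv (R : realFieldType) n (M : 'M[R]_n) r (p : 'S_n) i j k :
  gS M r i j k = gS M r (p i) (p j) (p k).
Proof. by rewrite /gS (sum_perm_inv _ p); apply: eq_bigr => s _; rewrite !permM. Qed.

Lemma G2_inv (R : realFieldType) n (M : 'M[R]_n) (p : 'S_n) i j :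
  G2 M i j = G2 M (p i) (p j).
Proof. by rewrite /G2 (sum_perm_inv _ p); apply: eq_bigr => s _; rewrite !permM. Qed.

Lemma E1_inv (R : realFieldType) n (r : 'I_n -> R) (p : 'S_n) k :
  E1 r k = E1 r (p k).
Proof. by rewrite /E1 (sum_perm_inv _ p); apply: eq_bigr => s _; rewrite !permM. Qed.

Arguments gS_inv {R n}. Arguments G2_inv {R n}. Arguments E1_inv {R n}.

Lemma gval (R : realFieldType) n (M : 'M[R]_n) r (a0 a1 a2 i j k : 'I_n) :
  M^T = M -> a0 != a1 -> a0 != a2 -> a1 != a2 -> i != j ->
  gS M r i j k = if (k == i) || (k == j) then gS M r a0 a1 a0 else gS M r a0 a1 a2.
Proof.
move=> hM d01 d02 d12 dij.
case: (eqVneq k i) => [->|ki] /=.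
  have [p [p0 p1]] := ext2 d01 dij.
  by rewrite (gS_inv M r p a0) p0 p1.
case: (eqVneq k j) => [->|kj] /=.
  have dji : j != i by rewrite eq_sym.
  have [p [p0 p1]] := ext2 d01 dji.
  rewrite (gS_inv M r p a0) p0 p1 /gS; apply: eq_bigr => s _.
  have := congr1 (fun A : 'M[R]_n => A (s i) (s j)) hM; rewrite mxE => ->; done.
have dik : i != k by rewrite eq_sym.
have djk : j != k by rewrite eq_sym.
have [p [p0 p1 p2]] := ext3 d01 d02 d12 dij dik djk.
by rewrite (gS_inv M r p a0) p0 p1 p2.
Qed.

Lemma G2val (R : realFieldType) n (M : 'M[R]_n) (a0 a1 i j : 'I_n) :
  a0 != a1 -> i != j -> G2 M i j = G2 M a0 a1.
Proof. move=> d01 dij; have [p [p0 p1]] := ext2 d01 dij; by rewrite (G2_inv M p a0) p0 p1. Qed.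

Lemma E1val (R : realFieldType) n (r : 'I_n -> R) (a0 k : 'I_n) : E1 r k = E1 r a0.
Proof. by rewrite (E1_inv r (tperm a0 k) a0) tpermL. Qed.

Arguments gval {R n}. Arguments G2val {R n}. Arguments E1val {R n}.
Arguments count2 {R n}. Arguments count0 {R n}. Arguments pairsum {R n}.

Lemma sumSL (R : realFieldType) n (M : 'M[R]_n) (r : 'I_n -> R)
   (c : 'I_n -> 'I_n -> R) (w : 'I_n -> R) :
  \sum_(s : 'S_n) (\sum_(i < n) \sum_(j < n | j != i) M (s i) (s j) * c i j)
                  * (\sum_(k < n) w k * r (s k))
  = \sum_(i < n) \sum_(j < n | j != i) (\sum_(k < n) w k * gS M r i j k) * c i j.
Proof.
under eq_bigr => s _ do rewrite mulr_suml.
rewrite exchange_big; apply: eq_bigr => i _.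
under eq_bigr => s _ do rewrite mulr_suml.
rewrite exchange_big; apply: eq_bigr => j _.
rewrite /gS mulr_suml.
under [RHS]eq_bigr => k _ do rewrite mulr_sumr mulr_suml.
rewrite exchange_big; apply: eq_bigr => s _.
rewrite mulr_sumr; apply: eq_bigr => k _; ring.
Qed.

Lemma sumS (R : realFieldType) n (M : 'M[R]_n) (c : 'I_n -> 'I_n -> R) :
  \sum_(s : 'S_n) (\sum_(i < n) \sum_(j < n | j != i) M (s i) (s j) * c i j)
  = \sum_(i < n) \sum_(j < n | j != i) G2 M i j * c i j.
Proof.
rewrite exchange_big; apply: eq_bigr => i _.
rewrite exchange_big; apply: eq_bigr => j _.
by rewrite /G2 mulr_suml.
Qed.

Arguments lin_S {R n}. Arguments sumSL {R n}. Arguments sumS {R n}.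

Lemma key (R : realFieldType) n t (M1 M2 : 'M[R]_n) :
  M1^T = M1 -> (4 <= n)%N -> (2 <= t)%N -> (t <= n - 2)%N ->
  permCov (Wstat M1 t) (Dstat M2 t) = 0.
Proof.
move=> hM hn ht2 htn.
have n0 : (0 < n)%N by lia.
have n1 : (1 < n)%N by lia.
have n2 : (2 < n)%N by lia.
pose a0 : 'I_n := Ordinal n0.
pose a1 : 'I_n := Ordinal n1.
pose a2 : 'I_n := Ordinal n2.
have d01 : a0 != a1 by [].
have d02 : a0 != a2 by [].
have d12 : a1 != a2 by [].
have tn : (t <= n)%N by lia.
set r := rho M2. set C := Ctot M2.
pose lin (s : 'S_n) := \sum_(k < n) ((k < t)%N)%:R * r (s k).
set tR : R := t%:R. set nR : R := n%:R.
have ht : ((t * (t - 1))%:R : R) = tR * (tR - 1) by rewrite natrM natrB //; lia.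
have hnt' : ((n - t)%:R : R) = nR - tR by rewrite natrB.
have hnt : (((n - t) * (n - t - 1))%:R : R) = (nR - tR) * (nR - tR - 1).
  by rewrite natrM [((n - t - 1)%:R)]natrB ?hnt' //; lia.
have hnn : ((n * (n - 1))%:R : R) = nR * (nR - 1) by rewrite natrM natrB //; lia.
have nz1 : tR != 0 by rewrite pnatr_eq0; lia.
have nz2 : tR - 1 != 0.
  have : ((t - 1)%:R : R) != 0 by rewrite pnatr_eq0; lia.
  by rewrite natrB //; lia.
have nz3 : nR - tR != 0.
  have : ((n - t)%:R : R) != 0 by rewrite pnatr_eq0; lia.
  by rewrite hnt'.
have nz4 : nR - tR - 1 != 0.
  have : ((n - t - 1)%:R : R) != 0 by rewrite pnatr_eq0; lia.
  by rewrite natrB ?hnt' //; lia.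
have nz5 : nR != 0 by rewrite pnatr_eq0; lia.
have nz6 : nR - 1 != 0.
  have : ((n - 1)%:R : R) != 0 by rewrite pnatr_eq0; lia.
  by rewrite natrB //; lia.
have hD : forall s, Dstat M2 t s = (lin s - C) / (nR * (nR - 1)).
  move=> s; have e := lin_S t M2 s.
  rewrite /Dstat (_ : alpha M2 t s = ((t * (t - 1))%:R)^-1 * S1 M2 t s) //.
  rewrite (_ : beta M2 t s = (((n - t) * (n - t - 1))%:R)^-1 * S2 M2 t s) //.
  rewrite ht hnt hnn /lin -/r -/C -e; field.
  by rewrite -/tR -/nR nz1 nz2 nz3 nz4 nz5 nz6.
have hW : forall s, Wstat M1 t s = tR / nR * ((tR * (tR - 1))^-1 * S1 M1 t s)
   + (nR - tR) / nR * (((nR - tR) * (nR - tR - 1))^-1 * S2 M1 t s).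
  by move=> s; rewrite /Wstat /alpha /beta -ht -hnt -hnt'.
set G := G2 M1 a0 a1. set h := gS M1 r a0 a1 a0. set g3 := gS M1 r a0 a1 a2.
have hY1 : \sum_(s : 'S_n) S1 M1 t s = tR * (tR - 1) * G.
  transitivity (\sum_(i < n) \sum_(j < n | j != i) G2 M1 i j * ((i < t)%N && (j < t)%N)%:R).
    exact: sumS.
  rewrite (pairsum (fun k : 'I_n => (k < t)%N) (G2 M1) G) ?cnt_lt //.
  by move=> i j dij _ _; exact: G2val.
have hY2 : \sum_(s : 'S_n) S2 M1 t s = (nR - tR) * (nR - tR - 1) * G.
  transitivity (\sum_(i < n) \sum_(j < n | j != i) G2 M1 i j * ((t <= i)%N && (t <= j)%N)%:R).
    exact: sumS.
  rewrite (pairsum (fun k : 'I_n => (t <= k)%N) (G2 M1) G) ?cnt_ge // ?hnt' //.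
  by move=> i j dij _ _; exact: G2val.
have hX1 : \sum_(s : 'S_n) S1 M1 t s * lin s = tR * (tR - 1) * (h *+ 2 + g3 * (tR - 2)).
  transitivity (\sum_(i < n) \sum_(j < n | j != i)
     (\sum_(k < n) ((k < t)%N)%:R * gS M1 r i j k) * ((i < t)%N && (j < t)%N)%:R).
    exact: sumSL.
  rewrite (pairsum (fun k : 'I_n => (k < t)%N) _ (h *+ 2 + g3 * (tR - 2))) ?cnt_lt //.
  move=> i j dij hi hj.
  under eq_bigr => k _ do rewrite (gval M1 r a0 a1 a2 i j k hM d01 d02 d12 dij).
  by rewrite (count2 (fun k : 'I_n => (k < t)%N)) ?cnt_lt.
have hX2 : \sum_(s : 'S_n) S2 M1 t s * lin s = (nR - tR) * (nR - tR - 1) * (g3 * tR).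
  transitivity (\sum_(i < n) \sum_(j < n | j != i)
     (\sum_(k < n) ((k < t)%N)%:R * gS M1 r i j k) * ((t <= i)%N && (t <= j)%N)%:R).
    exact: sumSL.
  rewrite (pairsum (fun k : 'I_n => (t <= k)%N) _ (g3 * tR)) ?cnt_ge ?hnt' //.
  move=> i j dij hi hj.
  under eq_bigr => k _ do rewrite (gval M1 r a0 a1 a2 i j k hM d01 d02 d12 dij).
  by rewrite (count0 (fun k : 'I_n => (k < t)%N)) ?cnt_lt // -leqNgt.
set E := E1 r a0.
set Sr := \sum_(u < n) r u.
set Z := \sum_(s : 'S_n) (1 : R).
have hL : \sum_(s : 'S_n) lin s = tR * E.
  rewrite /lin exchange_big.
  transitivity (\sum_(k < n) ((k < t)%N)%:R * E).
    apply: eq_bigr => k _; rewrite -mulr_sumr; congr (_ * _).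
    exact: (E1val r a0 k).
  by rewrite -mulr_suml cnt_lt // mulrC.
have hE : nR * E = Z * Sr.
  transitivity (\sum_(k < n) E1 r k).
    rewrite (eq_bigr (fun _ => E)); last by move=> k _; exact: E1val.
    by rewrite sumr_const card_ord -mulr_natl.
  rewrite /E1 exchange_big /Z mulr_suml; apply: eq_bigr => s _.
  by rewrite mul1r (reidx s r).
have hrel : h *+ 2 + g3 * (nR - 2) = G * Sr.
  transitivity (\sum_(k < n) gS M1 r a0 a1 k).
    rewrite (eq_bigr (fun k => ((xpredT k : bool))%:R * (if (k == a0) || (k == a1) then h else g3))).
      by rewrite (count2 xpredT) // sumr_const card_ord.
    by move=> k _; rewrite mul1r (gval M1 r a0 a1 a2 a0 a1 k hM d01 d02 d12 d01).
  rewrite /gS exchange_big /G /G2 mulr_suml; apply: eq_bigr => s _.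
  by rewrite -mulr_sumr (reidx s r).
have hZ : Z = (n`!)%:R by rewrite /Z sumr_const card_Sn.
have nzZ : Z != 0 by rewrite hZ pnatr_eq0 -lt0n fact_gt0.
set A1 := tR / nR * (tR * (tR - 1))^-1.
set B1 := (nR - tR) / nR * ((nR - tR) * (nR - tR - 1))^-1.
set N := nR * (nR - 1).
have nzN : N != 0 by rewrite /N mulf_neq0.
have sWD : \sum_(s : 'S_n) Wstat M1 t s * Dstat M2 t s
   = A1 / N * (tR * (tR - 1) * (h *+ 2 + g3 * (tR - 2)))
     + B1 / N * ((nR - tR) * (nR - tR - 1) * (g3 * tR))
     - A1 * C / N * (tR * (tR - 1) * G) - B1 * C / N * ((nR - tR) * (nR - tR - 1) * G).
  rewrite -hX1 -hX2 -hY1 -hY2.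
  transitivity (\sum_(s : 'S_n) (A1 / N * (S1 M1 t s * lin s) + B1 / N * (S2 M1 t s * lin s)
      - A1 * C / N * S1 M1 t s - B1 * C / N * S2 M1 t s)).
    apply: eq_bigr => s _; rewrite hW hD -/A1 -/B1 -/N.
    rewrite /A1 /B1; field.
    by rewrite -/tR -/nR nzN nz1 nz2 nz3 nz4 nz5.
  by rewrite !sumrB big_split /= !mulr_sumr.
have sW : \sum_(s : 'S_n) Wstat M1 t s = A1 * (tR * (tR - 1) * G) + B1 * ((nR - tR) * (nR - tR - 1) * G).
  rewrite -hY1 -hY2 !mulr_sumr -big_split /=; apply: eq_bigr => s _.
  by rewrite hW /A1 /B1; ring.
have sD : \sum_(s : 'S_n) Dstat M2 t s = (tR * E - C * Z) / N.
  rewrite -hL /Z.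
  transitivity (\sum_(s : 'S_n) (N^-1 * lin s - (C / N) * 1)).
    by apply: eq_bigr => s _; rewrite hD -/N; field.
  by rewrite sumrB -!mulr_sumr; field.
rewrite /permCov /Defs.permE /= sWD sW sD -hZ.
have hE' : E = Z * Sr / nR by rewrite -hE; field.
have hh : h *+ 2 = G * Sr - g3 * (nR - 2) by rewrite -hrel; ring.
rewrite hE' hh /A1 /B1 /N.
field.
by rewrite -/tR -/nR nzZ nz1 nz2 nz3 nz4 nz5 nz6.
Qed.

Lemma cov_bilin (R : realFieldType) n (X1 X2 Y1 Y2 : 'S_n -> R) (c1 c2 d1 d2 : R) :
  permCov (fun s => c1 * X1 s + c2 * X2 s) (fun s => d1 * Y1 s + d2 * Y2 s)
  = c1 * d1 * permCov X1 Y1 + c1 * d2 * permCov X1 Y2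
    + c2 * d1 * permCov X2 Y1 + c2 * d2 * permCov X2 Y2.
Proof.
rewrite /permCov /Defs.permE /=.
have e1 : \sum_(s : 'S_n) (c1 * X1 s + c2 * X2 s) * (d1 * Y1 s + d2 * Y2 s)
  = c1 * d1 * \sum_s X1 s * Y1 s + c1 * d2 * \sum_s X1 s * Y2 s
    + c2 * d1 * \sum_s X2 s * Y1 s + c2 * d2 * \sum_s X2 s * Y2 s.
  rewrite !mulr_sumr -!big_split /=; apply: eq_bigr => s _; ring.
have e2 : \sum_(s : 'S_n) (c1 * X1 s + c2 * X2 s) = c1 * \sum_s X1 s + c2 * \sum_s X2 s.
  by rewrite !mulr_sumr -big_split.
have e3 : \sum_(s : 'S_n) (d1 * Y1 s + d2 * Y2 s) = d1 * \sum_s Y1 s + d2 * \sum_s Y2 s.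
  by rewrite !mulr_sumr -big_split.
rewrite e1 e2 e3; ring.
Qed.

Theorem mainTheorem2 (R : realFieldType) (n t : nat) (K : 'I_2 -> 'M[R]_n)
  (hsym : forall x : 'I_2, (K x)^T = K x)
  (hn : (4 <= n)%N) (ht2 : (2 <= t)%N) (htn : (t <= n - 2)%N) :
  (forall a b : 'I_2,
     permCov (Wstat (K a) t) (Dstat (K b) t) = 0)
  /\
  (forall c1 c2 d1 d2 : R,
     permCov (fun s => c1 * Wstat (K ord0) t s + c2 * Wstat (K ord_max) t s)
             (fun s => d1 * Dstat (K ord0) t s + d2 * Dstat (K ord_max) t s) = 0).
Proof.
have H : forall a b : 'I_2, permCov (Wstat (K a) t) (Dstat (K b) t) = 0.
  by move=> a b; apply: key.
split => //.
move=> c1 c2 d1 d2; rewrite cov_bilin !H; ring.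
Qed.
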